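(* Let $F=\begin{pmatrix}0&-1&0\\-1&4&-1\\0&-1&0\end{pmatrix}$ (edge detect B filter). Then for all $m,n\in\mathbb{N}$, it is not the case that the equation $F*X=B$ with the reflexive boundary condition, for unknown $X\in\mathbb{R}^{m\times n}$, has a unique solution for every $B\in\mathbb{R}^{m\times n}$.
   Context: For $F=[f_{ij}]\in\mathbb{R}^{3\times3}$ and $X=[x_{ij}]\in\mathbb{R}^{m\times n}$, the convolution $F*X\in\mathbb{R}^{m\times n}$ is defined by $[F*X]_{ij}=\sum_{l_1=1}^3\sum_{l_2=1}^3 f_{l_1l_2}\,x_{i-l_1+2,\,j-l_2+2}$ for $1\le i\le m$, $1\le j\le n$, where the reflexive boundary condition sets $x_{0j}=x_{1j}$, $x_{m+1,j}=x_{mj}$, $x_{i0}=x_{i1}$, $x_{i,n+1}=x_{in}$ (for all indices $i\in\{0,\dots,m+1\}$, $j\in\{0,\dots,n+1\}$, so corners are also determined, e.g. $x_{00}=x_{11}$). *)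

(* Defs.v *)
From HB Require Import structures.
From mathcomp Require Import all_boot all_order all_algebra.
From mathcomp Require Import reals.
Set Implicit Arguments. Unset Strict Implicit. Unset Printing Implicit Defensive.
Import Order.TTheory GRing.Theory Num.Theory.
Local Open Scope ring_scope.

(* Reflexive boundary: a 1-based extended index k in {0,..,m+1} is mapped to
   the 0-based index of the matrix entry it denotes:
   0 |-> 0 (= x_1), k |-> k-1 for 1 <= k <= m, m+1 |-> m-1 (= x_m). *)
Definition clamp (m k : nat) : nat := (minn (maxn k 1) m).-1.

(* x_{a b} for 1-based extended indices a in {0..m+1}, b in {0..n+1}
   under the reflexive boundary condition (the fallback 0 is never used
   when m, n >= 1). *)
Definition xref {R : pzRingType} {m n : nat} (X : 'M[R]_(m, n)) (a b : nat) : R :=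
  match @insub nat (fun k => (k < m)%N) 'I_m (clamp m a),
        @insub nat (fun k => (k < n)%N) 'I_n (clamp n b) with
  | Some i, Some j => X i j
  | _, _ => 0
  end.

(* [F*X]_{ij} = sum_{l1,l2=1}^3 f_{l1 l2} x_{i-l1+2, j-l2+2}.
   With 0-based i : 'I_m (1-based i+1) and 0-based l1 : 'I_3 (1-based l1+1),
   the 1-based extended row index is (i+1)-(l1+1)+2 = i+2-l1. *)
Definition conv {R : pzRingType} {m n : nat} (F : 'M[R]_3) (X : 'M[R]_(m, n))
  : 'M[R]_(m, n) :=
  \matrix_(i < m, j < n)
     \sum_(l1 < 3) \sum_(l2 < 3) F l1 l2 * xref X (i + 2 - l1)%N (j + 2 - l2)%N.

Definition edgeB {R : pzRingType} : 'M[R]_3 :=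
  \matrix_(i < 3, j < 3)
     (if (i == 1 :> nat) && (j == 1 :> nat) then 4
      else if (i == 1 :> nat) || (j == 1 :> nat) then -1 else 0).

(* Main.v *)
Require Import Defs.
From HB Require Import structures.
From mathcomp Require Import all_boot all_order all_algebra.
From mathcomp Require Import reals.
From mathcomp Require Import lra.
Import Order.TTheory GRing.Theory Num.Theory.
Local Open Scope ring_scope.

Lemma clamp_lt m k : (0 < m)%N -> (clamp m k < m)%N.
Proof.
move=> hm; rewrite /clamp.
have h1 : (0 < minn (maxn k 1) m)%N.
  by rewrite leq_min hm andbT leq_max ltnSn orbT.
have h2 : (minn (maxn k 1) m <= m)%N by apply: geq_minr.
by rewrite prednK // in h2 *; case: (minn _ _) h1 h2 => // p _ /=.
Qed.

Lemma xref_const (R : pzRingType) m n (hm : (0 < m)%N) (hn : (0 < n)%N) a b :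
  xref (const_mx 1 : 'M[R]_(m, n)) a b = 1.
Proof.
rewrite /xref.
case: insubP => [i _ _|]; last by rewrite clamp_lt.
case: insubP => [j _ _|]; last by rewrite clamp_lt.
by rewrite mxE.
Qed.

Theorem corollary12 (R : realType) (m n : nat) (hm : (0 < m)%N) (hn : (0 < n)%N) :
  ~ (forall B : 'M[R]_(m, n), exists! X : 'M[R]_(m, n), conv edgeB X = B).
Proof.
move=> H.
have hc : conv edgeB (const_mx 1 : 'M[R]_(m, n)) = 0.
  apply/matrixP => i j; rewrite !mxE.
  under eq_bigr do under eq_bigr do rewrite xref_const // mulr1.
  rewrite !big_ord_recr !big_ord0 /= !mxE /=.
  lra.
have h0 : conv edgeB (0 : 'M[R]_(m, n)) = 0.
  apply/matrixP => i j; rewrite !mxE.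
  rewrite big1 // => l1 _; rewrite big1 // => l2 _.
  rewrite /xref; case: insubP => [i' _ _|_]; last by rewrite mulr0.
  by case: insubP => [j' _ _|_]; rewrite ?mxE mulr0.
have [X [_ HX]] := H 0.
have e1 := HX _ hc; have e2 := HX _ h0.
have : (const_mx 1 : 'M[R]_(m, n)) (Ordinal hm) (Ordinal hn) = (0 : 'M[R]_(m,n)) (Ordinal hm) (Ordinal hn).
  by rewrite -e1 -e2.
by rewrite !mxE; apply/eqP; rewrite oner_eq0.
Qed.
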